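(* $(\widetilde{W}_{\tilde v},\prec_{\tilde o^*})$ does not admit a regular nice labeling. Consequently, Thiagarajan's conjecture (a prime event structure is isomorphic to the event structure of a finite 1-safe Petri net if and only if it is regular; equivalently, an event structure is regular if and only if it is a regular trace event structure) is false.
   Context: Let $\mathbf{X}$ be Wise's complete square complex (from Wise, ''Complete square complexes''): a $VH$-complex with a single vertex, three vertical edges colored $a,b,c$, two horizontal edges colored $x,y$, and six squares, with horizontal edges oriented left to right and vertical edges bottom to top; its universal cover contains a directed plane whose tiling by (preimages of) these squares is not doubly periodic, and in the quarter-plane spanned by the rays colored $y$ and $c$ from a vertex every positive word in $x,y$ of length $n$ appears as the label of a horizontal path of length $n$ starting at one of the first $2^n$ vertices of the vertical $c$-ray, all these words being distinct. Let $W$ be obtained from the first barycentric subdivision of $\mathbf{X}$ (forgetting colors) by attaching to each edge midpoint of color $\alpha$ a path (tip) of length $r(\alpha)$, for a fixed bijection $r:\{a,b,c,x,y\}\to\{1,\dots,5\}$, with edges oriented as in the subdivision (left to right, bottom to top) and tip edges oriented away from their roots (orientation $o^*$). Let $\widetilde{W}$ be the universal cover of $W$ with induced orientation $\tilde o^*$ and partial order $\prec_{\tilde o^*}$, and for a preimage $\tilde v$ of the original vertex of $\mathbf{X}$ let $\widetilde{W}_{\tilde v}$ be the principal filter of $\tilde v$; $(\widetilde{W}_{\tilde v},\prec_{\tilde o^*})$ is the domain of a regular event structure (finite degree and finitely many isomorphism types of futures of configurations). A nice labeling is a labeling of events (equivalently, of the directed edges of the domain, with opposite edges of every square equally labeled)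 such that co-initial events (edges leaving the same vertex) get different labels; it is regular if it uses a finite alphabet and the labeled event structure has finitely many isomorphism types of labeled futures. Every regular trace labeling is a regular nice labeling. *)

(* Defs.v *)
From Stdlib Require Import List Relations.
From mathcomp Require Import all_boot.
Set Implicit Arguments. Unset Strict Implicit. Unset Printing Implicit Defensive.

(* Edge colours: vertical a b c, horizontal x y. *)
Inductive col := ca | cb | cc | cx | cy.

(* An (oriented) square of the VH-complex X: its bottom and top edges are
   horizontal (oriented left to right), its left and right edges are
   vertical (oriented bottom to top); its boundary reads
   bottom . right = left . top. *)
Record square := Sq { sbot : col; sleft : col; stop : col; sright : col }.

(* The six squares of Wise's complete square complex (up to renaming the
   colours).  Relations: xa=ay, xc=bx, xb=cy, yb=ax, yc=by,
   ya=cx. *)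
Definition wise_squares : list square :=
  [:: Sq cx ca cy ca; Sq cx cb cx cc; Sq cx cc cy cb;
      Sq cy ca cx cb; Sq cy cb cy cc; Sq cy cc cx ca].

(* The fundamental group pi_1(X) (X has a single vertex), as words in   *)
(* the oriented edges modulo free reduction and the square relators.    *)
(* Its elements are the vertices of the universal cover of X.           *)

Definition letter := (col * bool)%type.   (* (e, true) = e, (e, false) = e^-1 *)
Definition word := list letter.
Definition linv (l : letter) : letter := (l.1, ~~ l.2).

Inductive elem : word -> word -> Prop :=
| el_cancel l : elem [:: l; linv l] [::]
| el_sq s : List.In s wise_squares ->
    elem [:: (sbot s, true); (sright s, true)] [:: (sleft s, true); (stop s, true)].

Inductive wstep : word -> word -> Prop :=
| ws p q u v : elem u v -> wstep (p ++ u ++ q) (p ++ v ++ q).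

Definition geq : word -> word -> Prop := clos_refl_sym_trans word wstep.

(* The universal cover W~ of W, where W = (cubical) first barycentric   *)
(* subdivision of X with a tip of length r(alpha) attached to every edge *)
(* midpoint of colour alpha.  Raw vertices are indexed by group words:   *)
(*   RV g      : lift g of the original vertex of X                      *)
(*   RM g e    : midpoint of the e-coloured edge of X~ from g to g.e     *)
(*   RC g s    : centre of the lift of square s with bottom-left corner g*)
(*   RT g e k  : k-th vertex (1 <= k <= r e) of the tip at RM g e        *)

Inductive rv :=
| RV of word
| RM of word & col
| RC of word & square
| RT of word & col & nat.

Inductive rveq : rv -> rv -> Prop :=
| rveqV w w' : geq w w' -> rveq (RV w) (RV w')
| rveqM w w' e : geq w w' -> rveq (RM w e) (RM w' e)
| rveqC w w' s : geq w w' -> rveq (RC w s) (RC w' s)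
| rveqT w w' e k : geq w w' -> rveq (RT w e k) (RT w' e k).

(* Directed edges of W~ with the orientation o~star: subdivided edges left to
   right / bottom to top, tip edges away from their roots. *)
Inductive redge (r : col -> nat) : rv -> rv -> Prop :=
| e_vm w e : redge r (RV w) (RM w e)
| e_mv w e : redge r (RM w e) (RV (w ++ [:: (e, true)]))
| e_lc w s : List.In s wise_squares -> redge r (RM w (sleft s)) (RC w s)
| e_bc w s : List.In s wise_squares -> redge r (RM w (sbot s)) (RC w s)
| e_cr w s : List.In s wise_squares ->
    redge r (RC w s) (RM (w ++ [:: (sbot s, true)]) (sright s))
| e_ct w s : List.In s wise_squares ->
    redge r (RC w s) (RM (w ++ [:: (sleft s, true)]) (stop s))
| e_mt w e : 1 <= r e -> redge r (RM w e) (RT w e 1)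
| e_tt w e k : 1 <= k -> k.+1 <= r e -> redge r (RT w e k) (RT w e k.+1).

(* The (directed) squares of W~: the four quarters of each subdivided
   square, given as (source, horizontal successor, vertical successor,
   sink). *)
Inductive rsq : rv -> rv -> rv -> rv -> Prop :=
| q_bl w s : List.In s wise_squares ->
    rsq (RV w) (RM w (sbot s)) (RM w (sleft s)) (RC w s)
| q_br w s : List.In s wise_squares ->
    rsq (RM w (sbot s)) (RV (w ++ [:: (sbot s, true)])) (RC w s)
        (RM (w ++ [:: (sbot s, true)]) (sright s))
| q_tl w s : List.In s wise_squares ->
    rsq (RM w (sleft s)) (RC w s) (RV (w ++ [:: (sleft s, true)]))
        (RM (w ++ [:: (sleft s, true)]) (stop s))
| q_tr w s : List.In s wise_squares ->
    rsq (RC w s) (RM (w ++ [:: (sbot s, true)]) (sright s))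
        (RM (w ++ [:: (sleft s, true)]) (stop s))
        (RV (w ++ [:: (sbot s, true); (sright s, true)])).

Definition WV := {P : rv -> Prop | exists t, P = rveq t}.
Definition cls (t : rv) : WV := exist _ (rveq t) (ex_intro _ t erefl).
Definition mem_cls (p : WV) (t : rv) : Prop := proj1_sig p t.

Definition wedge (r : col -> nat) (p q : WV) : Prop :=
  exists t u, mem_cls p t /\ mem_cls q u /\ redge r t u.

Definition wle (r : col -> nat) : WV -> WV -> Prop :=
  clos_refl_trans WV (wedge r).

(* Principal filter of u (= domain when u = v~, = future of u otherwise). *)
Definition filter_of (r : col -> nat) (u : WV) : WV -> Prop := wle r u.

(* A labeling of events is given as a labeling of directed edges of the *)
(* domain with opposite edges of every square equally labeled.          *)

Definition nice_labeling (r : col -> nat) (v : WV) (L : Type)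
    (lab : WV -> WV -> L) : Prop :=
  (forall t u1 u2 z, rsq t u1 u2 z -> filter_of r v (cls t) ->
      lab (cls t) (cls u1) = lab (cls u2) (cls z) /\
      lab (cls t) (cls u2) = lab (cls u1) (cls z)) /\
  (forall p q1 q2, filter_of r v p -> wedge r p q1 -> wedge r p q2 ->
      q1 <> q2 -> lab p q1 <> lab p q2).

Definition labeled_future_iso (r : col -> nat) (L : Type)
    (lab : WV -> WV -> L) (u u' : WV) : Prop :=
  exists f : WV -> WV,
    (forall z, filter_of r u z -> filter_of r u' (f z)) /\
    (forall z1 z2, filter_of r u z1 -> filter_of r u z2 -> f z1 = f z2 -> z1 = z2) /\
    (forall z', filter_of r u' z' -> exists2 z, filter_of r u z & f z = z') /\
    (forall z1 z2, filter_of r u z1 -> filter_of r u z2 ->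
        (wedge r z1 z2 <-> wedge r (f z1) (f z2))) /\
    (forall z1 z2, filter_of r u z1 -> filter_of r u z2 -> wedge r z1 z2 ->
        lab (f z1) (f z2) = lab z1 z2).

Definition regular_nice_labeling (r : col -> nat) (v : WV) (L : finType)
    (lab : WV -> WV -> L) : Prop :=
  nice_labeling r v lab /\
  exists reps : list WV,
    (forall u', List.In u' reps -> filter_of r v u') /\
    (forall u, filter_of r v u ->
       exists2 u', List.In u' reps & labeled_future_iso r lab u u').

(* Main.v *)
Require Import Defs.
From Stdlib Require Import List Relations ZArith Lia Classical FunctionalExtensionality PropExtensionality.
From mathcomp Require Import all_boot zify.
Set Implicit Arguments. Unset Strict Implicit. Unset Printing Implicit Defensive.

Inductive st := SA | SB | SC.
Definition step (s : st) (l : bool) : bool * st :=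
  match s, l with
  | SC, true => (false, SB) | SC, false => (true, SA)
  | SB, true => (true, SC) | SB, false => (false, SC)
  | SA, true => (false, SA) | SA, false => (true, SB) end.
Definition nonb (s : st) : bool := match s with SB => false | _ => true end.

Fixpoint out (s : st) (w : seq bool) : seq bool :=
  match w with [::] => [::] | l :: w' => (step s l).1 :: out (step s l).2 w' end.
Fixpoint fin (s : st) (w : seq bool) : st :=
  match w with [::] => s | l :: w' => fin (step s l).2 w' end.
Definition act (gs : seq st) (w : seq bool) := foldl (fun w s => out s w) w gs.
Fixpoint sec (gs : seq st) (l : bool) : bool * seq st :=
  match gs with [::] => (l, [::])
  | s :: gs' => let p := sec gs' (step s l).1 in (p.1, (step s l).2 :: p.2) end.

Lemma size_out s w : size (out s w) = size w.
Proof. by elim: w s => [|l w IH] s //=; rewrite IH. Qed.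
Lemma size_act gs w : size (act gs w) = size w.
Proof. by elim: gs w => [|s gs IH] w //=; rewrite IH size_out. Qed.

Lemma act_cons gs l w : act gs (l :: w) = (sec gs l).1 :: act (sec gs l).2 w.
Proof. by elim: gs l w => [|s gs IH] l w //=; rewrite IH. Qed.

Lemma act_cat gs hs w : act (gs ++ hs) w = act hs (act gs w).
Proof. by rewrite /act foldl_cat. Qed.

Lemma step1 s l : (step s l).1 = l (+) nonb s.
Proof. by case: s; case: l. Qed.

Lemma sec1 gs l : (sec gs l).1 = l (+) odd (count nonb gs).
Proof.
elim: gs l => [|s gs IH] l /=; first by rewrite addbF.
by rewrite IH step1 oddD; case: (nonb s); case: l; case: (odd _).
Qed.

Lemma sec2 gs l :
  odd (count nonb (sec gs l).2 + count nonb (sec gs (~~ l)).2) = odd (count nonb gs).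
Proof.
elim: gs l => [|s gs IH] l //=.
have -> : (step s (~~ l)).1 = ~~ (step s l).1 by case: s; case: l.
have H : odd (nonb (step s l).2 + nonb (step s (~~ l)).2) = nonb s by case: s; case: l.
move: (IH (step s l).1) H; rewrite !oddD.
by case: (odd (count _ (sec _ _).2)); case: (odd (count _ (sec _ (~~ _)).2));
   case: (nonb (step s l).2); case: (nonb (step s (~~ l)).2); case: (nonb s);
   case: (odd (count nonb gs)).
Qed.

Definition good gs := odd (count nonb gs).

Lemma act_good gs l w : good gs ->
  act gs (act gs (l :: w)) = l :: act ((sec gs l).2 ++ (sec gs (~~ l)).2) w.
Proof.
rewrite /good => g; rewrite act_cons act_cons sec1 g act_cat /=.
by rewrite sec1 g !addbT negbK.
Qed.

Lemma iter_good gs l w m : good gs ->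
  iter m.*2 (act gs) (l :: w) = l :: iter m (act ((sec gs l).2 ++ (sec gs (~~ l)).2)) w.
Proof.
move=> g; elim: m => [|m IH] //.
by rewrite doubleS /= IH act_good.
Qed.

Lemma good_sec gs l : good gs -> good ((sec gs l).2 ++ (sec gs (~~ l)).2).
Proof. by rewrite /good count_cat sec2. Qed.

Lemma orbit_st n : forall gs w k, good gs -> size w = n -> 0 < k < 2 ^ n ->
  iter k (act gs) w != w.
Proof.
elim: n => [|n IH] gs w k g sw /andP[k0 kn]; first by rewrite expn0 in kn; lia.
case: w sw => [//|l w] /= [sw].
rewrite -(odd_double_half k).
case ok: (odd k) => /=.
  rewrite iter_good // act_cons sec1 (g : odd _ = true) addbT.
  apply/negP => /eqP [] /eqP; by case: l.
rewrite add0n iter_good //.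
apply/negP => /eqP [] /eqP; apply/negP; apply: IH => //; first exact: good_sec.
apply/andP; split.
  rewrite lt0n; apply/negP => /eqP h; move: k0 ok; rewrite -(odd_double_half k) h; by case: (odd k).
rewrite expnS in kn. move: kn; rewrite -{1}(odd_double_half k) ok add0n -muln2. lia.
Qed.

Lemma geq_refl w : Defs.geq w w. Proof. unfold Defs.geq; apply rst_refl. Qed.
Lemma geq_sym w w' : Defs.geq w w' -> Defs.geq w' w. Proof. unfold Defs.geq; apply rst_sym. Qed.
Lemma geq_trans w1 w2 w3 : Defs.geq w1 w2 -> Defs.geq w2 w3 -> Defs.geq w1 w3. Proof. unfold Defs.geq; apply rst_trans. Qed.

Lemma geq_app_r w w' s : Defs.geq w w' -> Defs.geq (w ++ s) (w' ++ s).
Proof.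
elim=> [x y [p q u v e]| x|x y _ IH|x y z _ IH1 _ IH2].
- apply: rst_step; rewrite -!catA; exact: ws.
- exact: rst_refl.
- exact: rst_sym.
- exact: rst_trans IH1 IH2.
Qed.

Lemma rveq_refl t : rveq t t.
Proof. case: t => *; constructor; exact: geq_refl. Qed.
Lemma rveq_sym t u : rveq t u -> rveq u t.
Proof. case=> *; constructor; exact: geq_sym. Qed.
Lemma rveq_trans t u v : rveq t u -> rveq u v -> rveq t v.
Proof.
case=> [w w' h|w w' e h|w w' s h|w w' e k h] H; inversion H; subst;
  constructor; exact: geq_trans h _.
Qed.

Lemma rveq_ext t u : rveq t u -> rveq t = rveq u.
Proof.
move=> h; apply: functional_extensionality => x; apply: propositional_extensionality.
split=> h'; [exact: rveq_trans (rveq_sym h) h' | exact: rveq_trans h h'].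
Qed.

Lemma sig_eq (P Q : rv -> Prop) (hp : exists t, P = rveq t) (hq : exists t, Q = rveq t) :
  P = Q -> exist (fun P => exists t, P = rveq t) P hp = exist _ Q hq.
Proof. move=> e; subst; f_equal; apply: proof_irrelevance. Qed.

Lemma cls_eq t u : rveq t u -> cls t = cls u.
Proof. move=> h; apply: sig_eq; exact: rveq_ext. Qed.

Lemma mem_cls_self t : mem_cls (cls t) t.
Proof. exact: rveq_refl. Qed.

Lemma mem_cls_eq p u : mem_cls p u -> p = cls u.
Proof.
case: p => P [t0 e] /= h; rewrite /mem_cls /= in h; subst.
apply: sig_eq; exact: rveq_ext.
Qed.

Lemma cls_rveq t u : cls t = cls u -> rveq t u.
Proof. move=> e; have := mem_cls_self u; rewrite -e; exact. Qed.

Lemma wedge_cls r t u : redge r t u -> wedge r (cls t) (cls u).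
Proof. by move=> h; exists t, u; split; [exact: mem_cls_self|split; [exact: mem_cls_self|]]. Qed.

Lemma wedge_inv r t q : wedge r (cls t) q ->
  exists t' u, rveq t t' /\ q = cls u /\ redge r t' u.
Proof. case=> t' [u [h1 [h2 h3]]]; exists t', u; split=> //; split=> //; exact: mem_cls_eq. Qed.

Definition lsg (l : letter) : Z := if l.2 then 1%Z else (-1)%Z.
Fixpoint zsig (w : word) : Z := match w with [::] => 0%Z | l :: w' => (lsg l + zsig w')%Z end.
Lemma sig_cat w w' : zsig (w ++ w') = (zsig w + zsig w')%Z.
Proof. elim: w => [|l w IH] /=; lia. Qed.
Lemma geq_sig w w' : Defs.geq w w' -> zsig w = zsig w'.
Proof.
elim=> [x y [p q u v e]| x|x y _ IH|x y z _ IH1 _ IH2]; try lia.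
rewrite !sig_cat; case: e => [l|s _] /=; last lia.
rewrite /lsg /=; case: l.2 => /=; lia.
Qed.
Lemma zsig1 e : zsig [:: (e, true)] = 1%Z. Proof. by []. Qed.
Lemma zsig2 e f : zsig [:: (e, true); (f, true)] = 2%Z. Proof. by []. Qed.
Definition ht (t : rv) : Z :=
  match t with
  | RV w => (8 * zsig w)%Z | RM w _ => (8 * zsig w + 1)%Z
  | RC w _ => (8 * zsig w + 2)%Z | RT w _ k => (8 * zsig w + 2 + Z.of_nat k)%Z end.
Lemma ht_rveq t u : rveq t u -> ht t = ht u.
Proof. case=> [w w' h|w w' e h|w w' s h|w w' e k h]; rewrite /= (geq_sig h); lia. Qed.
Lemma ht_redge r t u : redge r t u -> (ht t < ht u)%Z.
Proof. case=> *; rewrite /ht ?sig_cat ?zsig1 ?zsig2; lia. Qed.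

Lemma mem_ex (p : WV) : exists t, mem_cls p t.
Proof. case: p => P [t e]; exists t; rewrite /mem_cls /= e; exact: rveq_refl. Qed.

Lemma wle_ht r p q : wle r p q -> p = q \/
  (forall t u, mem_cls p t -> mem_cls q u -> (ht t < ht u)%Z).
Proof.
elim=> [x y [t [u [h1 [h2 h3]]]]|x|x y z _ IH1 _ IH2].
- right=> t' u' h1' h2'.
  have e1 := mem_cls_eq h1; have e1' := mem_cls_eq h1'.
  have e2 := mem_cls_eq h2; have e2' := mem_cls_eq h2'.
  rewrite e1 in e1'; rewrite e2 in e2'.
  rewrite -(ht_rveq (cls_rveq e1')) -(ht_rveq (cls_rveq e2')); exact: ht_redge h3.
- by left.
- case: IH1 => [->|H1]; first by [].
  case: IH2 => [<-|H2]; first by right.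
  right=> t u ht hu; case: (mem_ex y) => m hm; move: (H1 _ _ ht hm) (H2 _ _ hm hu); lia.
Qed.

Lemma wle_antisym r p q : wle r p q -> wle r q p -> p = q.
Proof.
move=> h1 h2; case: (wle_ht h1) => // H1; case: (wle_ht h2) => // H2.
case: (mem_ex p) => t ht; case: (mem_ex q) => u hu.
move: (H1 _ _ ht hu) (H2 _ _ hu ht); lia.
Qed.

Definition sink r q := forall q', ~ wedge r q q'.
Definition usucc r q q' := wedge r q q' /\ forall q'', wedge r q q'' -> q'' = q'.
Fixpoint tipchain r k q : Prop :=
  match k with 0 => sink r q | k.+1 => exists q', usucc r q q' /\ tipchain r k q' end.
Definition DD r p k := exists q, wedge r p q /\ tipchain r k q.

Lemma two_not_tip r q q1 q2 k : wedge r q q1 -> wedge r q q2 -> q1 <> q2 -> ~ tipchain r k q.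
Proof.
move=> w1 w2 ne; case: k => [|k] /=; first by move=> S; exact: S _ w1.
by case=> q' [[_ U] _]; apply: ne; rewrite (U _ w1) (U _ w2).
Qed.

Lemma RV_not_tip r w k : ~ tipchain r k (cls (RV w)).
Proof.
apply: (two_not_tip (wedge_cls (e_vm r w ca)) (wedge_cls (e_vm r w cb))).
by move=> /cls_rveq h; inversion h.
Qed.

Lemma RC_not_tip r w s k : List.In s wise_squares -> ~ tipchain r k (cls (RC w s)).
Proof.
move=> hs; apply: (two_not_tip (wedge_cls (e_cr r w hs)) (wedge_cls (e_ct r w hs))).
move=> /cls_rveq h; inversion h; subst.
move: hs H3; rewrite /wise_squares /=.
by intuition subst.
Qed.

Lemma RT_wedge_inv r w e m q : wedge r (cls (RT w e m)) q ->
  q = cls (RT w e m.+1) /\ m.+1 <= r e.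
Proof.
case/wedge_inv=> t' [u [h1 [-> h3]]]; inversion h1; subst; inversion h3; subst.
split=> //; apply: cls_eq; constructor; exact: geq_sym.
Qed.

Lemma tip_RT r w e k : forall m, tipchain r k (cls (RT w e m)) -> 1 <= m -> m <= r e -> k = r e - m.
Proof.
elim: k => [|k IH] m /=.
  move=> S m1 me; case: (ltnP m (r e)) => h; last lia.
  by case: (S _ (wedge_cls (e_tt w m1 h))).
case=> q' [[W _] T] m1 me.
case: (RT_wedge_inv W) => e1 e2; subst.
have := IH _ T (leqW m1) e2; lia.
Qed.

Lemma tip_RT_ex r w e : forall d m, d = r e - m -> 1 <= m -> m <= r e -> tipchain r d (cls (RT w e m)).
Proof.
elim=> [|d IH] m hd m1 me /=.
  by move=> q' /RT_wedge_inv [_ h]; lia.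
have mlt : m.+1 <= r e by lia.
exists (cls (RT w e m.+1)); split; last by apply: IH; lia.
split; first exact: wedge_cls (e_tt w m1 mlt).
by move=> q'' /RT_wedge_inv [].
Qed.

Lemma DD_RM r w e k : DD r (cls (RM w e)) k -> k = r e - 1.
Proof.
case=> q [W T]; case/wedge_inv: W => t' [u [h1 [e1 h3]]]; subst.
inversion h1; subst; inversion h3; subst.
- by case: (RV_not_tip T).
- by case: (RC_not_tip H3 T).
- by case: (RC_not_tip H3 T).
- exact: (tip_RT T).
Qed.

Lemma DD_RM_ex r w e : 1 <= r e -> DD r (cls (RM w e)) (r e - 1).
Proof.
move=> h; exists (cls (RT w e 1)); split; first exact: wedge_cls (e_mt w h).
exact: tip_RT_ex.
Qed.

Section Iso.
Variables (r : col -> nat) (u u' : WV) (f : WV -> WV).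
Hypothesis Hmap : forall z, filter_of r u z -> filter_of r u' (f z).
Hypothesis Hinj : forall z1 z2, filter_of r u z1 -> filter_of r u z2 -> f z1 = f z2 -> z1 = z2.
Hypothesis Hsurj : forall z', filter_of r u' z' -> exists2 z, filter_of r u z & f z = z'.
Hypothesis Hw : forall z1 z2, filter_of r u z1 -> filter_of r u z2 ->
        (wedge r z1 z2 <-> wedge r (f z1) (f z2)).

Lemma fil_step a b c : filter_of r a b -> wedge r b c -> filter_of r a c.
Proof. move=> h1 h2; apply: rt_trans h1 (rt_step _ _ _ _ h2). Qed.

Lemma tip_fwd k : forall q, filter_of r u q -> tipchain r k q -> tipchain r k (f q).
Proof.
elim: k => [|k IH] q hq /=.
  move=> S q'' W; have hq'' := fil_step (Hmap hq) W.
  case: (Hsurj hq'') => z hz ez; subst.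
  by apply: (S z); apply/(Hw hq hz).
case=> q' [[W U] T]; have hq' := fil_step hq W.
exists (f q'); split; last exact: IH.
split; first by apply/(Hw hq hq').
move=> q'' W''; have hq'' := fil_step (Hmap hq) W''.
case: (Hsurj hq'') => z hz ez; subst.
by rewrite (U z) //; apply/(Hw hq hz).
Qed.

Lemma tip_bwd k : forall q, filter_of r u q -> tipchain r k (f q) -> tipchain r k q.
Proof.
elim: k => [|k IH] q hq /=.
  move=> S q'' W; have hq'' := fil_step hq W.
  by apply: (S (f q'')); apply/(Hw hq hq'').
case=> q' [[W U] T]; have hq' := fil_step (Hmap hq) W.
case: (Hsurj hq') => z hz ez; subst.
exists z; split; last exact: IH.
split; first by apply/(Hw hq hz).
move=> q'' W''; have hq'' := fil_step hq W''.
apply: Hinj => //; apply: U; by apply/(Hw hq hq'').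
Qed.

Lemma DD_fwd z k : filter_of r u z -> DD r z k -> DD r (f z) k.
Proof.
move=> hz [q [W T]]; have hq := fil_step hz W.
exists (f q); split; [by apply/(Hw hz hq)| exact: tip_fwd].
Qed.

Lemma DD_bwd z k : filter_of r u z -> DD r (f z) k -> DD r z k.
Proof.
move=> hz [q [W T]]; have hq := fil_step (Hmap hz) W.
case: (Hsurj hq) => q0 hq0 e; subst.
exists q0; split; [by apply/(Hw hz hq0)| exact: tip_bwd].
Qed.

Lemma path_fwd z1 z2 : wle r z1 z2 -> filter_of r u z1 -> wle r (f z1) (f z2).
Proof.
move/clos_rt_rt1n_iff; elim=> [x|x y z W _ IH] hx; first exact: rt_refl.
have hy := fil_step hx W.
apply: rt_trans (IH hy); apply: rt_step; by apply/(Hw hx hy).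
Qed.

Lemma f_min : f u = u'.
Proof.
have hu : filter_of r u u by exact: rt_refl.
case: (Hsurj (rt_refl _ _ u')) => z0 hz0 e.
apply: wle_antisym; last exact: Hmap hu.
by rewrite -e; apply: path_fwd.
Qed.
End Iso.

Definition hc (b : bool) : col := if b then cx else cy.
Definition sc (s : st) : col := match s with SA => ca | SB => cb | SC => cc end.
Definition pos (e : col) : letter := (e, true).

Lemma step_sq s l :
  List.In (Sq (hc l) (sc s) (hc (step s l).1) (sc (step s l).2)) wise_squares.
Proof. case: s; case: l; rewrite /wise_squares /=; tauto. Qed.

Lemma nth_out s w j : j < size w ->
  nth false (out s w) j = (step (fin s (take j w)) (nth false w j)).1 /\
  fin s (take j.+1 w) = (step (fin s (take j w)) (nth false w j)).2.
Proof. elim: w s j => [|l w IH] s [|j] //= h; [by rewrite take0 | exact: IH]. Qed.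

Definition Rw n i := iter i (act [:: SC]) (nseq n false).
Lemma size_Rw n i : size (Rw n i) = n.
Proof. elim: i => [|i IH]; first by rewrite /Rw /= size_nseq. by rewrite /Rw iterS size_act. Qed.
Lemma Rw_S n i : Rw n i.+1 = out SC (Rw n i). Proof. by []. Qed.

Definition Wd g n i j := g ++ map pos (nseq i cc ++ map hc (take j (Rw n i))).
Definition Vs n i j := fin SC (take j (Rw n i)).
Definition Bc n i j := hc (nth false (Rw n i) j).

Lemma Wd_succ g n i j : j < n -> Wd g n i j.+1 = Wd g n i j ++ [:: pos (Bc n i j)].
Proof.
move=> h; rewrite /Wd (take_nth false); last by rewrite size_Rw.
by rewrite map_rcons -rcons_cat map_rcons -rcons_cat -cats1.
Qed.

Lemma Wd_0 g n i j : Wd g n i j = Wd g n i 0 ++ map pos (map hc (take j (Rw n i))).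
Proof. by rewrite /Wd take0 /= cats0 map_cat catA. Qed.

Lemma Wd_up g n i j : j <= n ->
  Defs.geq (Wd g n i j ++ [:: pos (sc (Vs n i j))]) (Wd g n i.+1 j).
Proof.
elim: j => [|j IH] h.
  rewrite /Wd /Vs !take0 /= !cats0 -catA map_nseq.
  have -> : nseq i (pos cc) ++ [:: pos cc] = pos cc :: nseq i (pos cc) by elim: i {h} => //= i ->.
  exact: geq_refl.
have hj : j < size (Rw n i) by rewrite size_Rw.
have [e1 e2] := nth_out SC hj.
rewrite (Wd_succ g i h) (Wd_succ g i.+1 h) /Vs e2 /Bc Rw_S e1 -/(Vs n i j).
set l := nth false (Rw n i) j; set s := Vs n i j.
have st1 : Defs.geq ((Wd g n i j ++ [:: pos (hc l)]) ++ [:: pos (sc (step s l).2)])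
                    ((Wd g n i j ++ [:: pos (sc s)]) ++ [:: pos (hc (step s l).1)]).
  rewrite -!(catA (Wd g n i j)).
  have W1 := ws (Wd g n i j) [::] (el_sq (step_sq s l)).
  move: W1; rewrite !cats0 => W1.
  by apply: rst_step.
apply: geq_trans st1 _; apply: geq_app_r; apply: IH; exact: ltnW.
Qed.


Lemma wle_RVpos r w es : wle r (cls (RV w)) (cls (RV (w ++ map pos es))).
Proof.
elim: es w => [|e es IH] w; first by rewrite cats0; exact: rt_refl.
have -> : w ++ map pos (e :: es) = (w ++ [:: pos e]) ++ map pos es by rewrite -catA.
apply: rt_trans (rt_step _ _ _ _ (wedge_cls (e_vm r w e))) _.
apply: rt_trans (rt_step _ _ _ _ (wedge_cls (e_mv r w e))) _.
exact: IH.
Qed.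

Section Lab.
Variables (r : col -> nat) (g : word) (L : Type) (lab : WV -> WV -> L).
Hypothesis Hsq : forall t u1 u2 z, rsq t u1 u2 z -> filter_of r (cls (RV g)) (cls t) ->
      lab (cls t) (cls u1) = lab (cls u2) (cls z) /\
      lab (cls t) (cls u2) = lab (cls u1) (cls z).

Lemma sq_lam w sq : List.In sq wise_squares -> filter_of r (cls (RV g)) (cls (RV w)) ->
  lab (cls (RV w)) (cls (RM w (sbot sq))) =
  lab (cls (RV (w ++ [:: pos (sleft sq)]))) (cls (RM (w ++ [:: pos (sleft sq)]) (stop sq))).
Proof.
move=> hin hw.
have hw' := fil_step hw (wedge_cls (e_vm r w (sleft sq))).
have [h1 _] := Hsq (q_bl w hin) hw; have [h2 _] := Hsq (q_tl w hin) hw'.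
by rewrite h1 h2.
Qed.

Lemma sq_mu w sq : List.In sq wise_squares -> filter_of r (cls (RV g)) (cls (RV w)) ->
  lab (cls (RM w (sbot sq))) (cls (RV (w ++ [:: pos (sbot sq)]))) =
  lab (cls (RM (w ++ [:: pos (sleft sq)]) (stop sq)))
      (cls (RV ((w ++ [:: pos (sleft sq)]) ++ [:: pos (stop sq)]))).
Proof.
move=> hin hw.
have hw' := fil_step hw (wedge_cls (e_vm r w (sbot sq))).
have hw'' := fil_step hw' (wedge_cls (e_bc r w hin)).
have [h1 _] := Hsq (q_br w hin) hw'; have [h2 _] := Hsq (q_tr w hin) hw''.
rewrite h1 h2; congr (lab _ _).
apply: cls_eq; constructor; rewrite -catA.
have W1 := ws w [::] (el_sq hin); move: W1; rewrite !cats0 => W1.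
exact: rst_step.
Qed.

Variable n : nat.
Definition Lam i j := lab (cls (RV (Wd g n i j))) (cls (RM (Wd g n i j) (Bc n i j))).
Definition Mu i j := lab (cls (RM (Wd g n i j) (Bc n i j)))
                         (cls (RV (Wd g n i j ++ [:: pos (Bc n i j)]))).

Lemma filt_W i j : filter_of r (cls (RV g)) (cls (RV (Wd g n i j))).
Proof. exact: wle_RVpos. Qed.

Lemma Bc_up i j : j < n -> hc (step (Vs n i j) (nth false (Rw n i) j)).1 = Bc n i.+1 j.
Proof.
move=> h; have hj : j < size (Rw n i) by rewrite size_Rw.
by rewrite /Bc Rw_S (nth_out SC hj).1.
Qed.

Lemma lam_up i j : j < n -> Lam i j = Lam i.+1 j.
Proof.
move=> h; have hin := step_sq (Vs n i j) (nth false (Rw n i) j).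
have := sq_lam hin (filt_W i j); cbn [sbot sleft stop sright].
rewrite (Bc_up i h) => H; rewrite /Lam {1 2}/Bc H.
have E := Wd_up g i (ltnW h).
by rewrite (cls_eq (rveqV E)) (cls_eq (rveqM _ E)).
Qed.

Lemma mu_up i j : j < n -> Mu i j = Mu i.+1 j.
Proof.
move=> h; have hin := step_sq (Vs n i j) (nth false (Rw n i) j).
have := sq_mu hin (filt_W i j); cbn [sbot sleft stop sright].
rewrite (Bc_up i h) => H; rewrite /Mu {1 2}/Bc H.
have E := Wd_up g i (ltnW h).
by rewrite (cls_eq (rveqV (geq_app_r _ E))) (cls_eq (rveqM _ E)).
Qed.

Lemma lam_0 i j : j < n -> Lam i j = Lam 0 j.
Proof. by move=> h; elim: i => [|i IH] //; rewrite -lam_up. Qed.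
Lemma mu_0 i j : j < n -> Mu i j = Mu 0 j.
Proof. by move=> h; elim: i => [|i IH] //; rewrite -mu_up. Qed.

End Lab.

Lemma hc_inj : injective hc. Proof. by case; case. Qed.

Section Main.
Variables (r : col -> nat) (g : word) (L : Type) (lab : WV -> WV -> L).
Hypothesis rpos : forall e, 1 <= r e.
Hypothesis rinj : injective r.
Hypothesis Hsq : forall t u1 u2 z, rsq t u1 u2 z -> filter_of r (cls (RV g)) (cls t) ->
      lab (cls t) (cls u1) = lab (cls u2) (cls z) /\
      lab (cls t) (cls u2) = lab (cls u1) (cls z).
Hypothesis Hco : forall p q1 q2, filter_of r (cls (RV g)) p -> wedge r p q1 -> wedge r p q2 ->
      q1 <> q2 -> lab p q1 <> lab p q2.
Variable n : nat.

Lemma fil_u i j : filter_of r (cls (RV (Wd g n i 0))) (cls (RV (Wd g n i j))).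
Proof. rewrite (Wd_0 g n i j); exact: wle_RVpos. Qed.

Lemma rows_eq i k u' : filter_of r (cls (RV g)) u' ->
  labeled_future_iso r lab (cls (RV (Wd g n i 0))) u' ->
  labeled_future_iso r lab (cls (RV (Wd g n k 0))) u' ->
  Rw n i = Rw n k.
Proof.
move=> hu' [f1 [m1 [i1 [s1 [w1 l1]]]]] [f2 [m2 [i2 [s2 [w2 l2]]]]].
suff: forall j, j <= n -> f1 (cls (RV (Wd g n i j))) = f2 (cls (RV (Wd g n k j))) /\
                            take j (Rw n i) = take j (Rw n k).
  by move/(_ n (leqnn n)) => [_]; rewrite !take_oversize ?size_Rw.
elim=> [|j IH] hj.
  by rewrite !take0; split=> //; rewrite (f_min m1 s1 w1) (f_min m2 s2 w2).
have jn : j < n by [].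
case: (IH (ltnW hj)) => E T.
set ai := cls (RV (Wd g n i j)); set ak := cls (RV (Wd g n k j)).
set ai' := cls (RM (Wd g n i j) (Bc n i j)); set ak' := cls (RM (Wd g n k j) (Bc n k j)).
set ai'' := cls (RV (Wd g n i j ++ [:: pos (Bc n i j)])).
set ak'' := cls (RV (Wd g n k j ++ [:: pos (Bc n k j)])).
have fa : filter_of r (cls (RV (Wd g n i 0))) ai := fil_u i j.
have fk : filter_of r (cls (RV (Wd g n k 0))) ak := fil_u k j.
have Wa' : wedge r ai ai' := wedge_cls (e_vm r _ _).
have Wk' : wedge r ak ak' := wedge_cls (e_vm r _ _).
have Wa'' : wedge r ai' ai'' := wedge_cls (e_mv r _ _).
have Wk'' : wedge r ak' ak'' := wedge_cls (e_mv r _ _).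
have fa' := fil_step fa Wa'; have fk' := fil_step fk Wk'.
have fa'' := fil_step fa' Wa''; have fk'' := fil_step fk' Wk''.
have hY : filter_of r (cls (RV g)) (f1 ai) := rt_trans _ _ _ _ _ hu' (m1 _ fa).
have E' : f1 ai' = f2 ak'.
  apply: NNPP => ne.
  apply: (Hco hY ((w1 _ _ fa fa').1 Wa') _ ne).
    by rewrite E; exact: ((w2 _ _ fk fk').1 Wk').
  rewrite (l1 _ _ fa fa' Wa') E (l2 _ _ fk fk' Wk').
  by rewrite -/(Lam g lab n i j) -/(Lam g lab n k j) (lam_0 Hsq i jn) (lam_0 Hsq k jn).
have eB : Bc n i j = Bc n k j.
  have D1 := DD_fwd m1 s1 w1 fa' (DD_RM_ex (Wd g n i j) (rpos (Bc n i j))).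
  rewrite E' in D1; have D2 := DD_bwd m2 i2 s2 w2 fk' D1.
  have := DD_RM D2; have := rpos (Bc n i j); have := rpos (Bc n k j) => p1 p2 e.
  apply: rinj; lia.
have hY' : filter_of r (cls (RV g)) (f1 ai') := rt_trans _ _ _ _ _ hu' (m1 _ fa').
have E'' : f1 ai'' = f2 ak''.
  apply: NNPP => ne.
  apply: (Hco hY' ((w1 _ _ fa' fa'').1 Wa'') _ ne).
    by rewrite E'; exact: ((w2 _ _ fk' fk'').1 Wk'').
  rewrite (l1 _ _ fa' fa'' Wa'') E' (l2 _ _ fk' fk'' Wk'').
  by rewrite -/(Mu g lab n i j) -/(Mu g lab n k j) (mu_0 Hsq i jn) (mu_0 Hsq k jn).
split; first by rewrite !Wd_succ.
rewrite !(take_nth false) ?size_Rw // T; congr rcons; exact: hc_inj.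
Qed.
End Main.

Lemma php (A : Type) (P : nat -> A -> Prop) (reps : list A) : forall I : seq nat, uniq I ->
  (forall i, i \in I -> exists2 a, List.In a reps & P i a) ->
  (forall a i k, List.In a reps -> i \in I -> k \in I -> P i a -> P k a -> i = k) -> size I <= length reps.
Proof.
elim: reps => [|a rs IH] I uI Hc Hu.
  case: I uI Hc Hu => [|i I] //= _ Hc _; by case: (Hc i (mem_head _ _)).
case: (classic (exists i, i \in I /\ P i a)) => [[i0 [hi0 Pi0]]|nex].
  have H := IH (rem i0 I) (rem_uniq _ uI).
  have : size (rem i0 I) <= length rs.
    apply: H.
      move=> i; rewrite (mem_rem_uniq _ uI) => /andP [ne hi].
      case: (Hc i hi) => b [<-|hb] Pb; last by exists b.
      by move: ne; rewrite (Hu _ _ _ (or_introl erefl) hi hi0 Pb Pi0) eqxx.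
    by move=> b i k hb; rewrite !(mem_rem_uniq _ uI) => /andP [_ hi] /andP [_ hk]; apply: Hu => //; right.
  rewrite size_rem //=; case: (size I) => //.
have H := IH I uI.
have : size I <= length rs.
  apply: H => //; last by move=> b i k hb; apply: Hu; right.
  move=> i hi; case: (Hc i hi) => b [<-|hb] Pb; last by exists b.
  by case: nex; exists i.
by move=> h /=; apply: leqW.
Qed.

Lemma rows_dist n i k : i < k < 2 ^ n -> Rw n i <> Rw n k.
Proof.
move=> /andP [ik kn] e.
have := @orbit_st n [:: SC] (Rw n i) (k - i) erefl (size_Rw n i).
rewrite /Rw -iterD subnK ?(ltnW ik) // -/(Rw n k) -e eqxx.
move=> h; have c : 0 < k - i < 2 ^ n by apply/andP; split; lia.
by have := h c.
Qed.

Theorem theorem6p5 (r : col -> nat) (r_inj : injective r)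
    (r_range : forall e, 1 <= r e <= 5)
    (g : word) (L : finType) (lab : WV -> WV -> L) :
  ~ regular_nice_labeling r (cls (RV g)) lab.
Proof.
case=> [[Hsq Hco] [reps [Hin Hcov]]].
have rpos : forall e, 1 <= r e by move=> e; case/andP: (r_range e).
set n := length reps.
have := @php _ (fun i a => labeled_future_iso r lab (cls (RV (Wd g n i 0))) a) reps
          (iota 0 (2 ^ n)) (iota_uniq _ _).
rewrite size_iota => H.
suff : 2 ^ n <= n by rewrite leqNgt ltn_expl.
apply: H.
  move=> i _; apply: Hcov; exact: wle_RVpos.
move=> a i k ha; rewrite !mem_iota !add0n => /andP [_ hi] /andP [_ hk] Pi Pk.
have E := rows_eq rpos r_inj Hsq Hco (Hin _ ha) Pi Pk.
case: (ltngtP i k) => // c.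
  by case: (rows_dist (n:=n) (i:=i) (k:=k)); [apply/andP|].
by case: (rows_dist (n:=n) (i:=k) (k:=i)); [apply/andP|].
Qed.
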